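(* Let $G$ be a finite $p$-group for some prime $p$, and let $X(G)$ be the subgroup generated by all normal subgroups $N$ of $G$ satisfying $\eta(G/N) = \eta(G)$. If some maximal cyclic subgroup of $G$ is normal in $G$, then $X(G)$ is cyclic.
   Context: A cyclic subgroup $C$ of a group $G$ is maximal cyclic if there is no cyclic subgroup $D$ of $G$ with $C < D$. $\eta(G)$ denotes the number of conjugacy classes of maximal cyclic subgroups of $G$ (for the trivial group, $\eta = 1$). *)

(* Defs.v *)
From mathcomp Require Import all_boot all_fingroup all_solvable.
Set Implicit Arguments. Unset Strict Implicit. Unset Printing Implicit Defensive.
Local Open Scope group_scope.

Definition max_cyclics (gT : finGroupType) (G : {set gT}) : {set {group gT}} :=
  [set C : {group gT} | [max C of H | (H \subset G) && cyclic H]].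

Definition eta (gT : finGroupType) (G : {set gT}) : nat :=
  #|[set orbit 'JG G C | C in max_cyclics G]|.

Definition Xgrp (gT : finGroupType) (G : {set gT}) : {set gT} :=
  << \bigcup_(N : {group gT} | (N <| G) && (eta (G / N) == eta G)) N >>.

(* Main.v *)
Require Import Defs.
From mathcomp Require Import all_boot all_fingroup all_solvable.
Local Open Scope group_scope.

Lemma maxcycJ (gT : finGroupType) (K E : {group gT}) y :
  E \in max_cyclics K -> y \in K -> (E :^ y)%G \in max_cyclics K.
Proof.
rewrite !inE => /maxgroupP [/andP [sEK cE] mE] yK.
apply/maxgroupP; split.
  by rewrite /= cyclicJ cE andbT -(normP (subsetP (normG K) y yK)) conjSg.
move=> H /andP [sHK cH] sEH.
have := mE (H :^ y^-1)%G.
rewrite /= cyclicJ cH -(normP (subsetP (normG K) _ (groupVr yK))) conjSg sHK.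
rewrite -sub_conjg sEH => /(_ isT isT) HE.
apply/val_inj => /=; by rewrite -HE conjsgKV.
Qed.

Lemma orbit_quo (gT : finGroupType) (G N D : {group gT}) :
  N <| G ->
  [set (X / N)%G | X in orbit 'JG G D] = orbit 'JG (G / N) (D / N)%G.
Proof.
case/andP=> _ nNG.
apply/setP => E; apply/imsetP/orbitP.
  case=> X /orbitP [g Gg <-] ->.
  exists (coset N g); first exact: mem_quotient.
  apply/val_inj => /=. by rewrite quotientJ // (subsetP nNG).
case=> a /morphimP [g Ng Gg ->] <-.
exists (D :^ g)%G; first by apply/orbitP; exists g.
apply/val_inj => /=. by rewrite quotientJ.
Qed.

Lemma maxcyc_lift (gT : finGroupType) (G D0 : {group gT}) :
  D0 \subset G -> cyclic D0 ->
  exists2 D : {group gT}, D \in max_cyclics G & D0 \subset D.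
Proof.
move=> sDG cD.
have [D mD sD] := @maxgroup_exists _ (fun H : {group gT} => (H \subset G) && cyclic H) D0 (introT andP (conj sDG cD)).
by exists D; rewrite ?inE.
Qed.

Lemma maxcyc_quo (gT : finGroupType) (G N : {group gT}) (E : {group coset_of N}) :
  N <| G -> E \in max_cyclics (G / N) ->
  exists2 D : {group gT}, D \in max_cyclics G & (D / N)%G = E.
Proof.
move=> nsNG; rewrite inE => /maxgroupP [/andP [sEG cE] mE].
case/cyclicP: cE => e defE.
have: e \in G / N by rewrite (subsetP sEG) // defE cycle_id.
case/morphimP => x Nx Gx ex.
have sxG : <[x]> \subset G by rewrite cycle_subG.
have [D mD sxD] := @maxcyc_lift _ G <[x]>%G sxG (cycle_cyclic x).
exists D => //.
move: mD; rewrite inE => /maxgroupP [/andP [sDG cD] _].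
have H1 : ((D / N)%G \subset G / N) && cyclic (D / N)%G.
  by rewrite /= quotientS // quotient_cyclic.
have H2 : E \subset (D / N)%G.
  by rewrite defE ex -quotient_cycle // quotientS.
exact: val_inj (mE _ H1 H2).
Qed.

Lemma key (gT : finGroupType) (G N C : {group gT}) :
  N <| G -> eta (G / N) = eta G -> C \in max_cyclics G -> C <| G ->
  N \subset C.
Proof.
move=> nsNG eqeta mC nsCG.
pose O := [set orbit 'JG G D | D in max_cyclics G].
pose O' := [set orbit 'JG (G / N) E | E in max_cyclics (G / N)].
pose h := fun S : {set {group gT}} => [set (X / N)%G | X in S].
have sO' : O' \subset h @: O.
  apply/subsetP => _ /imsetP [E mE ->].
  have [D mD <-] := @maxcyc_quo _ _ _ _ nsNG mE.
  apply/imsetP; exists (orbit 'JG G D); first by apply/imsetP; exists D.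
  by rewrite /h orbit_quo.
have cO : #|O'| = #|O| by exact: eqeta.
have cardh : #|h @: O| = #|O|.
  apply/eqP; rewrite eqn_leq leq_imset_card -cO; exact: subset_leq_card.
have injh : {in O &, injective h} by apply/imset_injP; rewrite cardh.
have eqO : O' = h @: O by apply/eqP; rewrite eqEcard sO' cardh cO leqnn.
have mCN : (C / N)%G \in max_cyclics (G / N).
  have : h (orbit 'JG G C) \in O' by rewrite eqO; apply/imsetP; exists (orbit 'JG G C) => //; apply/imsetP; exists C.
  case/imsetP => E mE eqE.
  have : (C / N)%G \in orbit 'JG (G / N) E.
    by rewrite -eqE; apply/imsetP; exists C => //; exact: orbit_refl.
  case/orbitP => a Ga <-.
  exact: maxcycJ.
apply/subsetP => x Nx.
have Gx : x \in G by rewrite (subsetP (normal_sub nsNG)).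
have sCG := normal_sub nsCG.
have cC : cyclic C by move: mC; rewrite inE => /maxgroupP [/andP []].
case/cyclicP: cC => c defC.
have Gc : c \in G by rewrite (subsetP sCG) // defC cycle_id.
have Gcx : c * x \in G by rewrite groupM.
have sxG : <[c * x]> \subset G by rewrite cycle_subG.
have [D mD sxD] := @maxcyc_lift _ G <[c * x]>%G sxG (cycle_cyclic _).
have eqD : (D / N)%G = (C / N)%G.
  move: mCN; rewrite inE => /maxgroupP [_ mx].
  move: mD; rewrite inE => /maxgroupP [/andP [sDG cD] _].
  have nNG := normal_norm nsNG.
  have H1 : ((D / N)%G \subset G / N) && cyclic (D / N)%G.
    by rewrite /= quotientS // quotient_cyclic.
  have H2 : (C / N)%G \subset (D / N)%G.
    rewrite /= defC quotient_cycle ?(subsetP nNG) //.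
    rewrite -(coset_kerr c Nx) -quotient_cycle ?(subsetP nNG) //.
    exact: quotientS.
  exact: val_inj (mx _ H1 H2).
have : h (orbit 'JG G D) = h (orbit 'JG G C).
  rewrite /h (@orbit_quo _ G N D nsNG) (@orbit_quo _ G N C nsNG). f_equal. exact eqD.
move=> eqh.
have eqorb : orbit 'JG G D = orbit 'JG G C.
  apply: injh eqh.
  - by apply/imsetP; exists D.
  - by apply/imsetP; exists C.
have : D \in orbit 'JG G C by rewrite -eqorb; exact: orbit_refl.
case/orbitP => g Gg /= defD.
have cxC : c * x \in C.
  have : c * x \in D by rewrite (subsetP sxD) // cycle_id.
  by rewrite -defD /= (normP (subsetP (normal_norm nsCG) g Gg)).
by rewrite -(groupMl _ (_ : c \in C)) // defC cycle_id.
Qed.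

Theorem theorem1p3 (gT : finGroupType) (G : {group gT}) (p : nat) :
  prime p -> p.-group G ->
  (exists2 C : {group gT}, C \in max_cyclics G & C <| G) ->
  cyclic (Xgrp G).
Proof.
move=> _ _ [C mC nsCG].
have cC : cyclic C by move: mC; rewrite inE => /maxgroupP [/andP []].
apply: cyclicS cC.
rewrite /Xgrp gen_subG; apply/bigcupsP => N /andP [nsNG /eqP e].
exact: (@key _ G N C nsNG e mC nsCG).
Qed.
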